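(* For every formula $\phi$, $\mathbf{GLP}\vdash[1]\phi$ if and only if $\mathbf{GLP}\vdash Q_k(\phi)$ for some $k\geq 1$.
   Context: $\mathbf{GLP}$ is the propositional polymodal logic with modalities $[0],[1],\dots$ ($\langle k\rangle:=\neg[k]\neg$) axiomatized by classical tautologies; $[k](\phi\to\psi)\to([k]\phi\to[k]\psi)$; $[k]([k]\phi\to\phi)\to[k]\phi$; $\langle j\rangle\phi\to[k]\langle j\rangle\phi$ for $j<k$; $[j]\phi\to[k]\phi$ for $j\leq k$; rules modus ponens and necessitation. Define $Q_1(\phi):=\phi$ and $Q_{i+1}(\phi):=\phi\lor[0]Q_i(\phi)$. *)

(* Defs.v *)
From Stdlib Require Import Arith.

Inductive form : Type :=
| Var : nat -> form
| Bot : form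
| Imp : form -> form -> form
| Box : nat -> form -> form.

Definition Neg (a : form) : form := Imp a Bot.
Definition Top : form := Neg Bot.
Definition Or (a b : form) : form := Imp (Neg a) b.
Definition And (a b : form) : form := Neg (Imp a (Neg b)).
Definition Dia (k : nat) (a : form) : form := Neg (Box k (Neg a)).

(* Classical propositional tautologies: formulas true under every Boolean
   valuation, where boxed subformulas are treated as atoms (valuation on them
   is arbitrary). *)
Fixpoint beval (v : form -> bool) (a : form) : bool :=
  match a with
  | Var _ => v a
  | Bot => false
  | Imp b c => implb (beval v b) (beval v c)
  | Box _ _ => v a
  end.

Definition tautology (a : form) : Prop := forall v : form -> bool, beval v a = true.

Inductive GLP_prv : form -> Prop :=
| ax_taut : forall a, tautology a -> GLP_prv a
| ax_K : forall k a b, GLP_prv (Imp (Box k (Imp a b)) (Imp (Box k a) (Box k b)))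
| ax_Lob : forall k a, GLP_prv (Imp (Box k (Imp (Box k a) a)) (Box k a))
| ax_neg : forall j k a, j < k -> GLP_prv (Imp (Dia j a) (Box k (Dia j a)))
| ax_mono : forall j k a, j <= k -> GLP_prv (Imp (Box j a) (Box k a))
| r_mp : forall a b, GLP_prv (Imp a b) -> GLP_prv a -> GLP_prv b
| r_nec : forall k a, GLP_prv a -> GLP_prv (Box k a).

(* Q_1(phi) = phi, Q_{i+1}(phi) = phi \/ [0] Q_i(phi).
   Indexed so that Q (S i) phi is Q_{i+1}; Q 0 phi is a dummy (= phi). *)
Fixpoint Q (i : nat) (phi : form) : form :=
  match i with
  | 0 => phi
  | 1 => phi
  | S i' => Or phi (Box 0 (Q i' phi))
  end.

(* Main.v *)
Require Import Defs.
From Stdlib Require Import Arith Lia List Bool ClassicalEpsilon Classical.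
Import ListNotations.

Ltac bdestr :=
  repeat match goal with
  | [ |- context [beval ?v ?x] ] => destruct (beval v x)
  | [ |- context [?v (Box ?k ?x)] ] => destruct (v (Box k x))
  | [ |- context [forallb ?f ?l] ] => destruct (forallb f l)
  end.
Ltac bt := let v := fresh "v" in intros v; simpl; bdestr; simpl; intros; try reflexivity; try discriminate; try congruence.

Lemma taut_imp : forall a b, (forall v, beval v a = true -> beval v b = true) ->
  GLP_prv a -> GLP_prv b.
Proof.
  intros a b H Ha. apply (r_mp a b); auto. apply ax_taut. intro v. simpl.
  specialize (H v). destruct (beval v a); simpl; auto.
Qed.

Lemma taut_imp2 : forall a b c,
  (forall v, beval v a = true -> beval v b = true -> beval v c = true) ->
  GLP_prv a -> GLP_prv b -> GLP_prv c.
Proof.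
  intros a b c H Ha Hb. apply (r_mp b c); auto. apply (r_mp a); auto.
  apply ax_taut. intro v. simpl.
  specialize (H v). destruct (beval v a), (beval v b); simpl; auto.
Qed.

Lemma taut_imp3 : forall a b c d,
  (forall v, beval v a = true -> beval v b = true -> beval v c = true -> beval v d = true) ->
  GLP_prv a -> GLP_prv b -> GLP_prv c -> GLP_prv d.
Proof.
  intros a b c d H Ha Hb Hc. apply (r_mp c d); auto. apply (r_mp b); auto. apply (r_mp a); auto.
  apply ax_taut. intro v. simpl.
  specialize (H v). destruct (beval v a), (beval v b), (beval v c); simpl; auto.
Qed.

Lemma box_mono : forall k a b, GLP_prv (Imp a b) -> GLP_prv (Imp (Box k a) (Box k b)).
Proof.
  intros. apply (r_mp (Box k (Imp a b))). apply ax_K. apply r_nec; auto.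
Qed.

Lemma box_and : forall k a b, GLP_prv (Imp (Box k a) (Imp (Box k b) (Box k (And a b)))).
Proof.
  intros.
  assert (H1 : GLP_prv (Imp (Box k a) (Box k (Imp b (And a b))))).
  { apply box_mono. apply ax_taut. bt. }
  assert (H2 := ax_K k b (And a b)).
  revert H1 H2. apply taut_imp2. bt.
Qed.

Lemma trans0 : forall a, GLP_prv (Imp (Box 0 a) (Box 0 (Box 0 a))).
Proof.
  intros a. set (p := And a (Box 0 a)).
  assert (H1 : GLP_prv (Imp (Box 0 p) (Box 0 a))) by (apply box_mono; apply ax_taut; unfold p; bt).
  assert (H2 : GLP_prv (Imp a (Imp (Box 0 p) p))).
  { revert H1. apply taut_imp. unfold p. bt. }
  apply box_mono with (k := 0) in H2.
  assert (H3 := ax_Lob 0 p).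
  assert (H4 : GLP_prv (Imp (Box 0 p) (Box 0 (Box 0 a)))) by (apply box_mono; apply ax_taut; unfold p; bt).
  revert H2 H3 H4. apply taut_imp3. bt.
Qed.

Lemma Q_box1 : forall phi k, GLP_prv (Imp (Box 1 (Q (S k) phi)) (Box 1 phi)).
Proof.
  intros phi k. induction k.
  - apply ax_taut. bt.
  - change (Q (S (S k)) phi) with (Or phi (Box 0 (Q (S k) phi))).
    set (q := Q (S k) phi) in *.
    assert (H1 := ax_mono 0 1 q ltac:(lia)).
    assert (H2 := ax_neg 0 1 (Neg q) ltac:(lia)).
    assert (H3 : GLP_prv (Imp (Neg (Box 0 q)) (Dia 0 (Neg q)))).
    { assert (GLP_prv (Imp (Box 0 (Neg (Neg q))) (Box 0 q))) by (apply box_mono; apply ax_taut; bt).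
      revert H. apply taut_imp. bt. }
    assert (H4 : GLP_prv (Imp (Box 1 (Dia 0 (Neg q))) (Box 1 (Neg (Box 0 q))))).
    { apply box_mono.
      assert (GLP_prv (Imp (Box 0 q) (Box 0 (Neg (Neg q))))) by (apply box_mono; apply ax_taut; bt).
      revert H. apply taut_imp. bt. }
    assert (H5 : GLP_prv (Imp (Box 1 (Or phi (Box 0 q))) (Box 1 (Imp (Neg (Box 0 q)) phi))))
      by (apply box_mono; apply ax_taut; bt).
    assert (H6 := ax_K 1 (Neg (Box 0 q)) phi).
    assert (H7 : GLP_prv (Imp (Neg (Box 0 q)) (Box 1 (Neg (Box 0 q))))).
    { revert H3 H2 H4. apply taut_imp3. bt. }
    assert (H8 : GLP_prv (Imp (Box 0 q) (Box 1 phi))).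
    { revert H1 IHk. apply taut_imp2. bt. }
    assert (H9 : GLP_prv (Imp (Box 1 (Or phi (Box 0 q))) (Imp (Box 1 (Neg (Box 0 q))) (Box 1 phi)))).
    { revert H5 H6. apply taut_imp2. bt. }
    revert H7 H8 H9. apply taut_imp3. bt.
Qed.

Fixpoint conj (l : list form) : form :=
  match l with [] => Top | x :: l' => And x (conj l') end.
Fixpoint rho (l : list form) : form :=
  match l with [] => Top | a :: l' => And (Imp (Box 0 a) a) (rho l') end.

Lemma beval_conj : forall v l, beval v (conj l) = forallb (beval v) l.
Proof. intros v l; induction l; simpl; auto. rewrite <- IHl.
  destruct (beval v a), (beval v (conj l)); auto. Qed.

Lemma beval_rho : forall v l, beval v (rho l) = forallb (fun a => implb (v (Box 0 a)) (beval v a)) l.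
Proof. intros v l; induction l; simpl; auto. rewrite <- IHl.
  destruct (v (Box 0 a)), (beval v a), (beval v (rho l)); auto. Qed.

Lemma key : forall phi n L c, length L = n ->
  GLP_prv (Imp c (Box 0 c)) -> GLP_prv (Imp (And c (rho L)) phi) ->
  GLP_prv (Imp c (Q (S n) phi)).
Proof.
  intros phi n. induction n; intros L c Hlen Hc H.
  - destruct L; [|simpl in Hlen; discriminate]. simpl Q. revert H. apply taut_imp. bt.
  - change (Q (S (S n)) phi) with (Or phi (Box 0 (Q (S n) phi))).
    set (X := Box 0 (Q (S n) phi)).
    assert (HL : forall a, In a L -> GLP_prv (Imp c (Imp (Box 0 a) X))).
    { intros a Ha. destruct (in_split a L Ha) as [L1 [L2 E]]. subst L.
      set (c' := And c (And a (Box 0 a))).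
      assert (Hc' : GLP_prv (Imp c' (Box 0 c'))).
      { assert (T := trans0 a).
        assert (B1 := box_and 0 a (Box 0 a)).
        assert (B2 := box_and 0 c (And a (Box 0 a))).
        assert (U : GLP_prv (Imp c' (Box 0 (And a (Box 0 a))))).
        { revert T B1. apply taut_imp2. unfold c'. bt. }
        revert Hc U B2. apply taut_imp3. unfold c'. bt. }
      assert (Hh : GLP_prv (Imp (And c' (rho (L1 ++ L2))) phi)).
      { revert H. apply taut_imp. intros v. simpl. rewrite !beval_rho, !forallb_app. simpl.
        unfold c'. simpl. bdestr; simpl; auto. }
      assert (IH := IHn (L1 ++ L2) c' ltac:(rewrite length_app in *; simpl in Hlen; lia) Hc' Hh).
      apply box_mono with (k := 0) in IH.
      assert (B2 := box_and 0 c (And a (Box 0 a))).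
      assert (B1 := box_and 0 a (Box 0 a)).
      assert (T := trans0 a).
      assert (U : GLP_prv (Imp (Box 0 a) (Box 0 (And a (Box 0 a))))).
      { revert T B1. apply taut_imp2. bt. }
      assert (U2 : GLP_prv (Imp c (Imp (Box 0 a) (Box 0 c')))).
      { revert Hc U B2. apply taut_imp3. unfold c'. bt. }
      revert U2 IH. apply taut_imp2. unfold X. bt. }
    assert (HN : forall L0, (forall a, In a L0 -> GLP_prv (Imp c (Imp (Box 0 a) X))) ->
                 GLP_prv (Imp c (Imp (Neg (rho L0)) X))).
    { induction L0 as [|b0 L0 IHL0]; intros HH.
      - apply ax_taut. bt.
      - assert (A1 := HH b0 (or_introl eq_refl)).
        assert (A2 := IHL0 (fun b Hb => HH b (or_intror Hb))).
        revert A1 A2. apply taut_imp2. simpl rho. bt. }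
    assert (HN' := HN L HL).
    revert H HN'. apply taut_imp2. bt.
Qed.

Fixpoint fl (n : nat) : list form :=
  match n with
  | 0 => [Bot; Var 0]
  | S m => fl m ++ (Var (S m) :: map (fun p => Imp (fst p) (snd p)) (list_prod (fl m) (fl m))
            ++ flat_map (fun k => map (Box k) (fl m)) (seq 0 (S (S m))))
  end.

Lemma fl_S : forall m, fl (S m) = fl m ++ (Var (S m) :: map (fun p => Imp (fst p) (snd p)) (list_prod (fl m) (fl m))
            ++ flat_map (fun k => map (Box k) (fl m)) (seq 0 (S (S m)))).
Proof. reflexivity. Qed.

Lemma fl_mono : forall n m x, n <= m -> In x (fl n) -> In x (fl m).
Proof.
  intros n m x H. induction H; auto. intros Hx. simpl. apply in_or_app. left. auto.
Qed.

Lemma fl_complete : forall t, exists n, In t (fl n).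
Proof.
  induction t.
  - destruct n. exists 0; simpl; auto. exists (S n). rewrite fl_S. apply in_or_app. right. left. auto.
  - exists 0. simpl. auto.
  - destruct IHt1 as [n1 H1], IHt2 as [n2 H2]. exists (S (max n1 n2)). rewrite fl_S.
    apply in_or_app. right. right. apply in_or_app. left.
    apply in_map_iff. exists (t1, t2). split; auto. apply in_prod.
    apply fl_mono with n1; auto; lia. apply fl_mono with n2; auto; lia.
  - destruct IHt as [n1 H1]. exists (S (max n1 n)). rewrite fl_S.
    apply in_or_app. right. right. apply in_or_app. right.
    apply in_flat_map. exists n. split. apply in_seq. lia.
    apply in_map. apply fl_mono with n1; auto; lia.
Qed.

Definition incons (X : form -> Prop) := exists L, (forall x, In x L -> X x) /\ GLP_prv (Imp (conj L) Bot).
Definition add (X : form -> Prop) (t : form) : form -> Prop := fun x => X x \/ x = t.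

Lemma ext_add : forall X t L, (forall x, In x L -> add X t x) ->
  exists L', (forall x, In x L' -> X x) /\
    forall v, beval v (conj L') = true -> beval v t = true -> beval v (conj L) = true.
Proof.
  intros X t L. induction L as [|y L IH]; intros H.
  - exists []. split. simpl; tauto. intros; reflexivity.
  - destruct IH as [L' [H1 H2]]. intros; apply H; simpl; auto.
    destruct (H y (or_introl eq_refl)) as [Hy|Hy].
    + exists (y :: L'). split. intros x [E|E]; subst; auto.
      intros v. specialize (H2 v). rewrite !beval_conj in *. simpl.
      destruct (beval v y); simpl; auto.
    + subst y. exists L'. split; auto. intros v. specialize (H2 v). rewrite !beval_conj in *. simpl.
      intros A B. rewrite B. simpl. auto.
Qed.

Lemma incons_split : forall X t, incons (add X t) -> incons (add X (Neg t)) -> incons X.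
Proof.
  intros X t [L1 [H1 P1]] [L2 [H2 P2]].
  destruct (ext_add X t L1 H1) as [L1' [G1 F1]].
  destruct (ext_add X (Neg t) L2 H2) as [L2' [G2 F2]].
  exists (L1' ++ L2'). split.
  - intros x Hx. apply in_app_or in Hx. destruct Hx; auto.
  - revert P1 P2. apply taut_imp2. intros v. specialize (F1 v). specialize (F2 v).
    simpl in *. rewrite !beval_conj in *. rewrite forallb_app.
    destruct (forallb (beval v) L1'), (forallb (beval v) L2'), (beval v t),
      (forallb (beval v) L1), (forallb (beval v) L2); simpl in *; auto.
Qed.

Definition step (X : form -> Prop) (t : form) : form -> Prop :=
  if excluded_middle_informative (incons (add X t)) then add X (Neg t) else add X t.
Fixpoint stepl (X : form -> Prop) (l : list form) : form -> Prop :=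
  match l with [] => X | t :: l' => stepl (step X t) l' end.
Fixpoint stage (R : form -> Prop) (n : nat) : form -> Prop :=
  match n with 0 => R | S m => stepl (stage R m) (fl m) end.
Definition Gam (R : form -> Prop) (x : form) : Prop := exists n, stage R n x.

Lemma step_incl : forall X t x, X x -> step X t x.
Proof. intros. unfold step. destruct excluded_middle_informative; left; auto. Qed.
Lemma stepl_incl : forall l X x, X x -> stepl X l x.
Proof. induction l; simpl; intros; auto. apply IHl. apply step_incl. auto. Qed.
Lemma step_cons : forall X t, ~ incons X -> ~ incons (step X t).
Proof. intros X t H. unfold step. destruct excluded_middle_informative; auto.
  intro. apply H. exact (incons_split X t i H0). Qed.
Lemma stepl_cons : forall l X, ~ incons X -> ~ incons (stepl X l).
Proof. induction l; simpl; intros; auto. apply IHl. apply step_cons. auto. Qed.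
Lemma stage_cons : forall R n, ~ incons R -> ~ incons (stage R n).
Proof. induction n; simpl; intros; auto. apply stepl_cons. auto. Qed.
Lemma stage_mono : forall R n m x, n <= m -> stage R n x -> stage R m x.
Proof. intros R n m x H. induction H; auto. intros. simpl. apply stepl_incl. auto. Qed.
Lemma step_dec : forall X t, step X t t \/ step X t (Neg t).
Proof. intros. unfold step. destruct excluded_middle_informative; [right|left]; right; auto. Qed.
Lemma stepl_dec : forall l X t, In t l -> stepl X l t \/ stepl X l (Neg t).
Proof.
  induction l; simpl; intros X t H. contradiction.
  destruct H as [E|H]. subst. destruct (step_dec X t); [left|right]; apply stepl_incl; auto.
  apply IHl; auto.
Qed.


Lemma Gam_dec : forall R x, Gam R x \/ Gam R (Neg x).
Proof.
  intros R x. destruct (fl_complete x) as [n Hn].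
  destruct (stepl_dec (fl n) (stage R n) x Hn); [left|right]; exists (S n); auto.
Qed.

Lemma Gam_cons : forall R, ~ incons R -> ~ incons (Gam R).
Proof.
  intros R HR [L [H1 H2]].
  assert (exists n, forall x, In x L -> stage R n x).
  { clear H2. induction L as [|y L IH].
    - exists 0. simpl. tauto.
    - destruct IH as [n Hn]. intros; apply H1; simpl; auto.
      destruct (H1 y (or_introl eq_refl)) as [m Hm].
      exists (max n m). intros x [E|E]. subst. apply stage_mono with m; auto; lia.
      apply stage_mono with n; auto; lia. }
  destruct H as [n Hn]. apply (stage_cons R n HR). exists L. auto.
Qed.

Lemma Gam_thm : forall R, ~ incons R -> forall x, GLP_prv x -> Gam R x.
Proof.
  intros R HR x Hx. destruct (Gam_dec R x); auto. exfalso. apply (Gam_cons R HR).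
  exists [Neg x]. split. intros y [E|[]]; subst; auto.
  revert Hx. apply taut_imp. bt.
Qed.

Lemma Gam_mp : forall R, ~ incons R -> forall x y, Gam R x -> Gam R (Imp x y) -> Gam R y.
Proof.
  intros R HR x y H1 H2. destruct (Gam_dec R y); auto. exfalso. apply (Gam_cons R HR).
  exists [x; Imp x y; Neg y]. split. intros z [E|[E|[E|[]]]]; subst; auto.
  apply ax_taut. bt.
Qed.

Lemma Gam_bot : forall R, ~ incons R -> ~ Gam R Bot.
Proof.
  intros R HR H. apply (Gam_cons R HR). exists [Bot]. split. intros z [E|[]]; subst; auto.
  apply ax_taut. bt.
Qed.

Lemma Gam_R : forall R x, R x -> Gam R x.
Proof. intros. exists 0. auto. Qed.

Fixpoint Mv (G P : form -> Prop) (t : form) : Prop :=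
  match t with
  | Var _ => G t
  | Bot => False
  | Imp a b => Mv G P a -> Mv G P b
  | Box 0 a => G (Box 0 a)
  | Box 1 a => P a
  | Box _ _ => True
  end.

Lemma Mv_taut : forall G P a, tautology a -> Mv G P a.
Proof.
  intros G P a Ht.
  set (v := fun x => if excluded_middle_informative (Mv G P x) then true else false).
  assert (E : forall b, beval v b = true <-> Mv G P b).
  { induction b; simpl.
    - unfold v. destruct excluded_middle_informative; simpl in *; split; intros; auto; try discriminate; contradiction.
    - split; intros; try discriminate; contradiction.
    - rewrite <- IHb1, <- IHb2. destruct (beval v b1), (beval v b2); simpl; intuition congruence.
    - unfold v. destruct excluded_middle_informative; split; intros; auto; try discriminate; contradiction. }
  apply E. apply Ht.
Qed.

Lemma Mv_sound : forall (G P : form -> Prop),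
  (forall x, GLP_prv x -> G x) ->
  (forall x y, G x -> G (Imp x y) -> G y) ->
  (forall x, GLP_prv x -> P x) ->
  (forall x y, P (Imp x y) -> P x -> P y) ->
  (forall b, P (Imp (Box 1 b) b) -> P b) ->
  (forall b, G (Box 0 b) -> P b) ->
  (forall a, ~ G (Box 0 (Neg a)) -> P (Dia 0 a)) ->
  forall t, GLP_prv t -> Mv G P t.
Proof.
  intros G P G1 G2 P1 P2 P3 P4 P5 t Ht. induction Ht.
  - apply Mv_taut; auto.
  - destruct k as [|[|k]]; simpl; intros; auto.
    apply (G2 (Box 0 a)); auto. apply (G2 (Box 0 (Imp a b))); auto. apply G1. apply ax_K.
    eauto.
  - destruct k as [|[|k]]; simpl; intros; auto.
    apply (G2 (Box 0 (Imp (Box 0 a) a))); auto. apply G1. apply ax_Lob.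
  - destruct k as [|[|k]]; [lia| |simpl; auto].
    destruct j; [|lia]. simpl. intros. apply P5. auto.
  - destruct j as [|[|j]], k as [|[|k]]; simpl; intros; auto; try lia.
  - simpl in IHHt1. auto.
  - destruct k as [|[|k]]; simpl; auto. apply G1. apply r_nec. auto.
Qed.

Definition P1 (G : form -> Prop) (b : form) : Prop :=
  exists a al, G (Box 0 a) /\ G al /\ GLP_prv (Imp al (Box 1 al)) /\ GLP_prv (Imp (And a al) b).

Lemma G_and : forall G : form -> Prop,
  (forall x, GLP_prv x -> G x) -> (forall x y, G x -> G (Imp x y) -> G y) ->
  forall x y, G x -> G y -> G (And x y).
Proof.
  intros G G1 G2 x y Hx Hy. apply (G2 y); auto. apply (G2 x); auto. apply G1. apply ax_taut. bt.
Qed.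

Lemma top_box1 : GLP_prv (Imp Top (Box 1 Top)).
Proof.
  assert (GLP_prv (Box 1 Top)) by (apply r_nec; apply ax_taut; bt).
  revert H. apply taut_imp. bt.
Qed.

Lemma top_box0 : GLP_prv (Imp Top (Box 0 Top)).
Proof.
  assert (GLP_prv (Box 0 Top)) by (apply r_nec; apply ax_taut; bt).
  revert H. apply taut_imp. bt.
Qed.

Lemma box01 : forall a, GLP_prv (Imp (Box 0 a) (Box 1 (Box 0 a))).
Proof.
  intros. assert (H1 := trans0 a). assert (H2 := ax_mono 0 1 (Box 0 a) ltac:(lia)).
  revert H1 H2. apply taut_imp2. bt.
Qed.

Lemma conj_box1 : forall a b, GLP_prv (Imp a (Box 1 a)) -> GLP_prv (Imp b (Box 1 b)) ->
  GLP_prv (Imp (And a b) (Box 1 (And a b))).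
Proof.
  intros a b H1 H2. assert (H3 := box_and 1 a b). revert H1 H2 H3. apply taut_imp3. bt.
Qed.


Lemma P1_thm : forall G : form -> Prop, (forall x, GLP_prv x -> G x) ->
  forall b, GLP_prv b -> P1 G b.
Proof.
  intros G G1 b Hb. exists Top, Top. repeat split.
  apply G1, r_nec, ax_taut; bt. apply G1, ax_taut; bt. apply top_box1.
  revert Hb. apply taut_imp. bt.
Qed.

Lemma P1_box : forall G : form -> Prop, (forall x, GLP_prv x -> G x) ->
  forall b, G (Box 0 b) -> P1 G b.
Proof.
  intros G G1 b Hb. exists b, Top. repeat split; auto.
  apply G1, ax_taut; bt. apply top_box1. apply ax_taut; bt.
Qed.

Lemma P1_dia : forall G : form -> Prop, (forall x, GLP_prv x -> G x) ->
  (forall x, G x \/ G (Neg x)) ->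
  forall a, ~ G (Box 0 (Neg a)) -> P1 G (Dia 0 a).
Proof.
  intros G G1 G3 a Ha. exists Top, (Dia 0 a). repeat split.
  apply G1, r_nec, ax_taut; bt. destruct (G3 (Box 0 (Neg a))); [contradiction|auto].
  apply ax_neg; lia. apply ax_taut; bt.
Qed.

Lemma P1_mp : forall G : form -> Prop,
  (forall x, GLP_prv x -> G x) -> (forall x y, G x -> G (Imp x y) -> G y) ->
  forall x y, P1 G (Imp x y) -> P1 G x -> P1 G y.
Proof.
  intros G G1 G2 x y [a1 [l1 [A1 [B1 [C1 D1]]]]] [a2 [l2 [A2 [B2 [C2 D2]]]]].
  exists (And a1 a2), (And l1 l2). repeat split.
  - apply (G2 (Box 0 a2)); auto. apply (G2 (Box 0 a1)); auto. apply G1. apply box_and.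
  - apply G_and; auto.
  - apply conj_box1; auto.
  - revert D1 D2. apply taut_imp2. bt.
Qed.

Lemma P1_lob : forall G : form -> Prop,
  (forall x, GLP_prv x -> G x) -> (forall x y, G x -> G (Imp x y) -> G y) ->
  forall b, P1 G (Imp (Box 1 b) b) -> P1 G b.
Proof.
  intros G G1 G2 b [a [l [A [B [C D]]]]].
  exists a, (And l (Box 0 a)). repeat split; auto.
  - apply G_and; auto.
  - apply conj_box1; auto. apply box01.
  - assert (H1 : GLP_prv (Imp (Box 1 (And a l)) (Box 1 (Imp (Box 1 b) b)))) by (apply box_mono; auto).
    assert (H2 := ax_Lob 1 b).
    assert (H3 := ax_mono 0 1 a ltac:(lia)).
    assert (H4 := box_and 1 a l).
    assert (H5 : GLP_prv (Imp (And l (Box 0 a)) (Box 1 (And a l)))).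
    { revert C H3 H4. apply taut_imp3. bt. }
    assert (H6 : GLP_prv (Imp (And l (Box 0 a)) (Box 1 b))).
    { revert H5 H1 H2. apply taut_imp3. bt. }
    revert D H6. apply taut_imp2. bt.
Qed.

Definition Rs (phi : form) : form -> Prop := fun x => x = Neg phi \/ exists a, x = Imp (Box 0 a) a.

Lemma extR : forall phi L, (forall x, In x L -> Rs phi x) ->
  exists L', forall v, beval v (rho L') = true -> beval v phi = false -> beval v (conj L) = true.
Proof.
  intros phi L. induction L as [|y L IH]; intros H.
  - exists []. intros; reflexivity.
  - destruct IH as [L' H2]. intros; apply H; simpl; auto.
    destruct (H y (or_introl eq_refl)) as [E|[a E]]; subst y.
    + exists L'. intros v A B. specialize (H2 v A B). simpl. rewrite H2, B. reflexivity.
    + exists (a :: L'). intros v A B. simpl in A |- *. rewrite beval_rho in *.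
      specialize (H2 v). rewrite beval_rho in H2.
      destruct (v (Box 0 a)), (beval v a), (forallb (fun a0 : form => implb (v (Box 0 a0)) (beval v a0)) L');
        simpl in *; try discriminate; rewrite H2; auto.
Qed.

Lemma Rs_cons : forall phi, (forall n, ~ GLP_prv (Q (S n) phi)) -> ~ incons (Rs phi).
Proof.
  intros phi HQ [L [H1 H2]]. destruct (extR phi L H1) as [L' HL].
  assert (H3 : GLP_prv (Imp (And Top (rho L')) phi)).
  { revert H2. apply taut_imp. intros v. specialize (HL v). simpl.
    destruct (beval v (conj L)), (beval v (rho L')), (beval v phi); simpl in *; auto. }
  assert (H4 := key phi (length L') L' Top eq_refl top_box0 H3).
  apply (HQ (length L')). revert H4. apply taut_imp. bt.
Qed.

Theorem mainTheorem15 : forall phi : form,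
  GLP_prv (Box 1 phi) <-> exists k : nat, 1 <= k /\ GLP_prv (Q k phi).
Proof.
  intros phi. split.
  - intros H. apply NNPP. intros Hn.
    assert (HQ : forall n, ~ GLP_prv (Q (S n) phi)).
    { intros n Hq. apply Hn. exists (S n). split; auto. lia. }
    assert (HR := Rs_cons phi HQ).
    set (G := Gam (Rs phi)).
    assert (G1 : forall x, GLP_prv x -> G x) by (apply Gam_thm; auto).
    assert (G2 : forall x y, G x -> G (Imp x y) -> G y) by (apply Gam_mp; auto).
    assert (G3 : forall x, G x \/ G (Neg x)) by (apply Gam_dec).
    assert (M := Mv_sound G (P1 G) G1 G2 (P1_thm G G1) (P1_mp G G1 G2) (P1_lob G G1 G2)
                   (P1_box G G1) (P1_dia G G1 G3) _ H).
    simpl in M. destruct M as [a [l [A [B [C D]]]]].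
    assert (Ga : G a).
    { apply (G2 (Box 0 a)); auto. apply Gam_R. right. exists a. auto. }
    assert (Gp : G phi).
    { apply (G2 (And a l)); auto. apply G_and; auto. }
    assert (Gn : G (Neg phi)) by (apply Gam_R; left; auto).
    apply (Gam_bot (Rs phi) HR). apply (G2 phi); auto.
  - intros [k [Hk H]]. destruct k as [|k]; [lia|].
    apply (r_mp (Box 1 (Q (S k) phi))). apply Q_box1. apply r_nec. auto.
Qed.
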